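(* Let $d$ be a positive integer, $q\geq 2$ an integer, and $x\in\mathbb{Z}$. Then $$\liminf_{N\to\infty}\frac{|\{n\in\mathbb{N}: n<N,\ u_q(n)+x\equiv 0\pmod d\}|}{N}\geq\frac{\varphi(d)}{dq}\left\lfloor\frac{q}{d}\right\rfloor,$$ where $\varphi$ is Euler's totient function.
   Context: For an integer $q\geq 2$ and $n\in\mathbb{N}$: $v_q(0)=0$ and, for $n>0$, $v_q(n)=\max\{k: q^k\mid n\}$; $w_q(n)=\sum_{i=0}^n v_q(i)$; $u_q(n)=\sum_{i=0}^n w_q(i)$. *)

(* Defs.v *)
From mathcomp Require Import all_boot all_order all_algebra.
From mathcomp Require Import all_classical all_reals all_analysis.

Set Implicit Arguments.
Unset Strict Implicit.
Unset Printing Implicit Defensive.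

(* v_q(0) = 0; for n > 0, v_q(n) = max { k : q^k | n }.
   For n > 0 and q >= 2 every such k satisfies k < n.+1, so the max over
   k < n.+1 is the max over all k. *)
Definition vq (q n : nat) : nat :=
  if n == 0 then 0 else \max_(k < n.+1 | q ^ k %| n) k.

Definition wq (q n : nat) : nat := \sum_(i < n.+1) vq q i.

Definition uq (q n : nat) : nat := \sum_(i < n.+1) wq q i.

Definition cnt (q d : nat) (x : int) (N : nat) : nat :=
  count (fun n => ((uq q n)%:Z + x)%R \in dvdz d%:Z) (iota 0 N).

(* Main.v *)
Require Import Defs.
From mathcomp Require Import all_boot all_order all_algebra.
From mathcomp Require Import all_classical all_reals all_analysis.
From mathcomp Require Import zify ring lra.
Set Implicit Arguments.
Unset Strict Implicit.

Section Nat.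
Variable q : nat.
Hypothesis q2 : 1 < q.

Lemma vq_spec n k : 0 < n -> q ^ k %| n -> ~~ (q ^ k.+1 %| n) -> vq q n = k.
Proof.
move=> n0 dk ndk; rewrite /vq; have -> : (n == 0) = false by case: n n0 {dk ndk}.
apply/eqP; rewrite eqn_leq; apply/andP; split.
  apply/bigmax_leqP => i /= di; rewrite leqNgt; apply/negP => ki.
  by move/negP: ndk; apply; apply: dvdn_trans di; apply: dvdn_exp2l.
have kn : k < n.+1.
  rewrite ltnS; apply: leq_trans (dvdn_leq n0 dk); exact: ltnW (ltn_expl k q2).
exact: (@leq_bigmax_cond _ (fun i : 'I_n.+1 => q ^ i %| n) (fun i => val i) (Ordinal kn)).
Qed.

Lemma val_exists n : 0 < n -> exists k, q ^ k %| n /\ ~~ (q ^ k.+1 %| n).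
Proof.
elim: n {-2}n (leqnn n) => [|N IH] n nN n0; first by case: n n0 nN.
case qn: (q %| n); last first.
  by exists 0; rewrite expn0 dvd1n expn1 qn.
move/dvdnP: qn => [n' en].
have n'0 : 0 < n' by move: n0; rewrite en muln_gt0 => /andP[].
have n'N : n' <= N.
  rewrite -ltnS; apply: leq_trans nN; rewrite en; exact: ltn_Pmulr.
have [k [h1 h2]] := IH n' n'N n'0.
exists k.+1; rewrite en (expnSr q k) (expnSr q k.+1) !dvdn_pmul2r ?h1 ?h2 //; exact: ltnW q2.
Qed.

Lemma vq0 : vq q 0 = 0.
Proof. by []. Qed.

Lemma v_shift a L i : 0 < i < q ^ L -> vq q (a * q ^ L + i) = vq q i.
Proof.
move=> /andP[i0 iL]; have [k [h1 h2]] := val_exists i0.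
have kL : k < L.
  rewrite ltnNge; apply/negP => Lk.
  have : q ^ L %| i by apply: dvdn_trans h1; apply: dvdn_exp2l.
  by move/(dvdn_leq i0); rewrite leqNgt iL.
rewrite (vq_spec i0 h1 h2); apply: vq_spec.
- by rewrite addn_gt0 i0 orbT.
- by rewrite dvdn_add // dvdn_mull // dvdn_exp2l // ltnW.
- by rewrite dvdn_addr // dvdn_mull // dvdn_exp2l.
Qed.

Lemma v_top a L : 0 < a -> ~~ (q %| a) -> vq q (a * q ^ L) = L.
Proof.
move=> a0 qa; apply: vq_spec; first by rewrite muln_gt0 a0 expn_gt0 ltnW.
  exact: dvdn_mull.
by rewrite expnSr (mulnC a) dvdn_pmul2l // expn_gt0 ltnW.
Qed.

Lemma wS n : wq q n.+1 = wq q n + vq q n.+1.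
Proof. by rewrite /wq big_ord_recr. Qed.

Lemma w0 : wq q 0 = 0.
Proof. by rewrite /wq big_ord_recr big_ord0. Qed.

Lemma uS n : uq q n.+1 = uq q n + wq q n.+1.
Proof. by rewrite /uq big_ord_recr. Qed.

Lemma W1 A L s : s < q ^ L -> wq q (A * q ^ L + s) = wq q (A * q ^ L) + wq q s.
Proof.
elim: s => [|s IH] sL; first by rewrite addn0 w0 addn0.
rewrite addnS !wS IH ?(ltnW sL) // -addnS v_shift ?sL //; lia.
Qed.

Lemma wsmall r : r < q -> wq q r = 0.
Proof.
elim: r => [|r IH] rq; first exact: w0.
rewrite wS IH ?(ltnW rq) // (@vq_spec _ 0) // ?expn0 ?dvd1n // expn1.
by apply/negP => /(dvdn_leq (ltn0Sn r)); rewrite leqNgt rq.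
Qed.

Lemma wstep a L : wq q (a * q ^ L + q ^ L) = wq q (a * q ^ L) + wq q (q ^ L).-1 + vq q (a.+1 * q ^ L).
Proof.
have qL : 0 < q ^ L by rewrite expn_gt0 ltnW.
have e : a * q ^ L + q ^ L = (a * q ^ L + (q ^ L).-1).+1 by rewrite -addnS prednK.
rewrite e wS W1 -?e ?mulSnr //; last by rewrite prednK.
Qed.

Lemma qn1 : ~~ (q %| 1).
Proof. by rewrite dvdn1 neq_ltn q2 orbT. Qed.

Lemma vpow L : vq q (q ^ L) = L.
Proof. by rewrite -[q ^ L]mul1n v_top // qn1. Qed.

Lemma wpow L : wq q (q ^ L) = wq q (q ^ L).-1 + L.
Proof.
have qL : 0 < q ^ L by rewrite expn_gt0 ltnW.
by rewrite -{1}(prednK qL) wS prednK // vpow.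
Qed.

Lemma W2 a L : a < q -> wq q (a * q ^ L) = a * wq q (q ^ L).
Proof.
elim: a => [|a IH] aq; first by rewrite !mul0n w0.
rewrite mulSnr wstep IH ?(ltnW aq) // v_top //; last first.
  by apply/negP => /(dvdn_leq (ltn0Sn a)); rewrite leqNgt aq.
by rewrite wpow mulSnr addnA.
Qed.

Lemma cS L : wq q (q ^ L.+1) = q * wq q (q ^ L) + 1.
Proof.
have qe : q = q.-1.+1 by rewrite prednK // ltnW.
have e : q ^ L.+1 = q.-1 * q ^ L + q ^ L by rewrite expnS {1}qe mulSnr.
have q1 : q.-1 < q by rewrite {2}qe.
rewrite e wstep (W2 _ q1) -qe -expnS vpow.
have := wpow L; set W := wq q (q ^ L); set W' := wq q (q ^ L).-1 => hW.
rewrite [in RHS]qe mulSn; lia.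
Qed.
End Nat.


Lemma sum_blocks (f : nat -> nat) K n :
  \sum_(0 <= i < K * n) f i = \sum_(0 <= k < K) \sum_(0 <= s < n) f (k * n + s).
Proof.
elim: K => [|K IH]; first by rewrite mul0n !big_geq.
rewrite big_nat_recr //= -IH mulSnr (@big_cat_nat _ _ _ (K * n)) ?leq_addr //=.
congr (_ + _).
rewrite -{1}(add0n (K * n)) big_addn addKn.
by apply: eq_bigr => i _; rewrite addnC.
Qed.

Lemma sum_lb m n (f : nat -> nat) c E T :
  (forall i, m <= i < n -> T <= c * f i + E) ->
  (n - m) * T <= c * \sum_(m <= i < n) f i + (n - m) * E.
Proof.
move=> h; rewrite -!sum_nat_const_nat big_distrr -big_split /=.
by rewrite big_nat_cond [X in _ <= X]big_nat_cond; apply: leq_sum => i /andP[/h].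
Qed.

Lemma sum_lb1 n (f : nat -> nat) c E T i0 : i0 < n ->
  (forall i, i < n -> T <= c * f i + E) ->
  c * f i0 + (n - 1) * T <= c * \sum_(0 <= i < n) f i + (n - 1) * E.
Proof.
move=> i0n h.
rewrite (@big_cat_nat _ _ _ i0) ?(ltnW i0n) //= (big_ltn i0n).
have h1 := @sum_lb 0 i0 f c E T (fun i hi => h i (leq_trans (proj2 (andP hi)) (ltnW i0n))).
have h2 := @sum_lb i0.+1 n f c E T (fun i hi => h i (proj2 (andP hi))).
have e1 : (n - 1) * T = (i0 - 0) * T + (n - i0.+1) * T by rewrite -mulnDl; congr (_ * _); lia.
have e2 : (n - 1) * E = (i0 - 0) * E + (n - i0.+1) * E by rewrite -mulnDl; congr (_ * _); lia.
rewrite e1 e2 !mulnDr; lia.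
Qed.

Lemma windows d (p : nat -> bool) k n : (forall i, exists2 r, i * d <= r < i * d + d & p r) ->
  k * d <= n -> k <= \sum_(0 <= r < n) p r.
Proof.
move=> h; elim: k n => [|k IH] n kn //.
have [r /andP[r1 r2] pr] := h k.
rewrite (@big_cat_nat _ _ _ (k * d)) //=; last by apply: leq_trans kn; rewrite mulSn leq_addl.
have kn' : k * d <= n by apply: leq_trans kn; rewrite mulSn leq_addl.
have rn : r < n by apply: leq_trans kn; rewrite mulSn addnC.
rewrite (@big_cat_nat _ _ _ r (k * d)) //= ?(ltnW rn) // (big_ltn rn) pr.
have := IH (k * d) (leqnn _); lia.
Qed.

Lemma sum_dvd_one d y : 0 < d -> \sum_(0 <= t < d) (d %| y + t) = 1.
Proof.
move=> d0; elim: y => [|y IH].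
  rewrite (big_ltn d0) add0n dvdn0 big_nat_cond big1 // => t /andP[/andP[t1 t2] _].
  by rewrite add0n; case: (boolP (d %| t)) => // /(dvdn_leq t1); rewrite leqNgt t2.
have e1 : \sum_(0 <= t < d.+1) (d %| y + t) = (d %| y) + \sum_(0 <= t < d) (d %| y.+1 + t).
  by rewrite big_nat_recl // addn0; congr (_ + _); apply: eq_bigr => i _; rewrite addnS.
have e2 : \sum_(0 <= t < d.+1) (d %| y + t) = \sum_(0 <= t < d) (d %| y + t) + (d %| y).
  by rewrite big_nat_recr //= [y + d]addnC dvdn_addr.
move: e1; rewrite e2 IH; lia.
Qed.

Lemma dvdn_sub_mod d m : 0 < d -> d %| m + (d - m %% d) %% d.
Proof.
move=> d0; have := ltn_pmod m d0; set r := m %% d => rd.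
rewrite {1}(divn_eq m d) -/r.
case: (posnP r) => [r0|rp].
  by rewrite r0 subn0 modnn !addn0 dvdn_mull.
rewrite modn_small; last by lia.
have -> : m %/ d * d + r + (d - r) = (m %/ d).+1 * d by rewrite mulSnr; lia.
exact: dvdn_mull.
Qed.

Lemma coprime_transfer d y t : d %| y + t -> coprime d t -> coprime d y.
Proof.
move=> h ct; rewrite /coprime -dvdn1 -(eqP ct) dvdn_gcd dvdn_gcdl /=.
have g1 : gcdn d y %| y + t by apply: dvdn_trans h; exact: dvdn_gcdl.
by rewrite -(dvdn_addr _ (dvdn_gcdr d y)).
Qed.


Section G.
Variables q d : nat.
Hypotheses (q2 : 1 < q) (d0 : 0 < d) (dq : d <= q).

Definition G J a := \sum_(0 <= s < q ^ J) (d %| wq q (s * q) + a).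
Definition cc J := wq q (q ^ J.+1).

Lemma G_step J a : G J.+1 a = \sum_(0 <= al < q) G J (a + al * cc J).
Proof.
rewrite /G expnS sum_blocks; apply: eq_big_nat => al /andP[_ alq].
apply: eq_big_nat => s /andP[_ sJ].
rewrite mulnDl -mulnA -expnSr W1 //; last by rewrite expnSr ltn_pmul2r // ltnW.
rewrite W2 // /cc; congr (nat_of_bool (d %| _)); lia.
Qed.

Lemma G_shift J y z : d %| z -> G J (y + z) = G J y.
Proof. by move=> dz; apply: eq_bigr => s _; rewrite addnA dvdn_addl. Qed.

Lemma G_total J a : \sum_(0 <= t < d) G J (a + t) = q ^ J.
Proof.
rewrite /G exchange_big_nat /=.
transitivity (\sum_(0 <= s < q ^ J) 1); last by rewrite sum_nat_const_nat subn0 muln1.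
apply: eq_bigr => s _; rewrite -(sum_dvd_one (wq q (s * q) + a) d0).
by apply: eq_bigr => t _; rewrite addnA.
Qed.

Lemma arith1 X : q * (q * X) = d * X + d * ((q - 1) * X) + (q - d) * (q * X).
Proof.
have hq : X + (q - 1) * X = q * X by rewrite -{1}(mul1n X) -mulnDl subnKC // ltnW.
by rewrite -mulnDr hq -mulnDl subnKC.
Qed.

Lemma arith2 X : (q * q - d) * X = d * ((q - 1) * X) + (q - d) * (q * X).
Proof.
rewrite !mulnA -mulnDl; congr (_ * _).
rewrite mulnBr muln1 mulnBl; have : d <= d * q by rewrite leq_pmulr // ltnW.
have : d * q <= q * q by rewrite leq_mul2r dq orbT.
lia.
Qed.

Lemma G_lower k a : q ^ (2 * k) <= d * G (2 * k) a + (q * q - d) ^ k.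
Proof.
elim: k a => [|k IH] a; first by rewrite muln0 !expn0 leq_addl.
have -> : 2 * k.+1 = (2 * k).+2 by rewrite mulnS.
move: IH; set J := 2 * k; set E := (q * q - d) ^ k => IH.
rewrite G_step; under eq_bigr => b _ do rewrite G_step.
rewrite (@big_cat_nat _ _ _ d) //=.
set SA := \sum_(0 <= b < d) _; set SB := \sum_(d <= b < q) _.
have hA : d * q ^ J + d * ((q - 1) * q ^ J) <= d * SA + d * ((q - 1) * E).
  have : \sum_(0 <= b < d) (d * G J (a + b) + (q - 1) * q ^ J) <=
         \sum_(0 <= b < d) (d * \sum_(0 <= al < q) G J (a + b * cc J.+1 + al * cc J) + (q - 1) * E).
    rewrite big_nat_cond [X in _ <= X]big_nat_cond; apply: leq_sum => b /andP[/andP[_ bd] _].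
    set al0 := (d - (b * q) %% d) %% d.
    have al0q : al0 < q by apply: leq_trans dq; exact: ltn_pmod.
    have := @sum_lb1 q (fun al => G J (a + b * cc J.+1 + al * cc J)) d E (q ^ J) al0 al0q
       (fun i _ => IH _).
    suff -> : G J (a + b * cc J.+1 + al0 * cc J) = G J (a + b) by [].
    have -> : a + b * cc J.+1 + al0 * cc J = (a + b) + (b * q + al0) * cc J.
      by rewrite /cc cS // -/(cc J); lia.
    by apply: G_shift; apply: dvdn_mulr; exact: dvdn_sub_mod.
  rewrite !big_split /= -!big_distrr /= G_total !sum_nat_const_nat subn0.
  rewrite -/SA => h; move: h; set Y := q - 1; lia.
have hB : (q - d) * (q * q ^ J) <= d * SB + (q - d) * (q * E).
  apply: sum_lb => b _; have := @sum_lb 0 q (fun al => G J (a + b * cc J.+1 + al * cc J)) d E (q ^ J)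
       (fun i _ => IH _).
  by rewrite subn0.
have e1 : q ^ J.+2 = q * (q * q ^ J) by rewrite !expnS.
have e2 : (q * q - d) ^ k.+1 = (q * q - d) * E by rewrite expnS.
rewrite e1 e2 arith1 arith2.
move: hA hB; set Y := q - 1; set Z := q - d; lia.
Qed.

Lemma cop_count J C E : (forall a, q ^ J <= d * G J a + E) ->
  totient d * q ^ J <= d * \sum_(0 <= s < q ^ J) coprime d (C + wq q (s * q)) + totient d * E.
Proof.
move=> h.
have step : \sum_(0 <= t < d) coprime d t * G J (C + t) <=
            \sum_(0 <= s < q ^ J) coprime d (C + wq q (s * q)).
  rewrite /G; under eq_bigr => t _ do rewrite big_distrr /=.
  rewrite exchange_big_nat /=; apply: leq_sum => s _.
  case: (boolP (coprime d (C + wq q (s * q)))) => hc.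
    apply: (@leq_trans (\sum_(0 <= t < d) (d %| wq q (s * q) + C + t))); last first.
      by rewrite sum_dvd_one.
    apply: leq_sum => t _.
    by rewrite addnA; case: (coprime d t); rewrite ?mul1n ?mul0n.
  rewrite leqn0; apply/eqP; apply: big1 => t _.
  case ct: (coprime d t); case dv: (d %| wq q (s * q) + (C + t)); rewrite ?muln0 ?mul0n //.
  move/negP: hc; case; apply: (@coprime_transfer _ _ t) => //.
  by rewrite [C + _]addnC -addnA.
rewrite totient_count_coprime !big_distrl /=.
apply: (@leq_trans (d * \sum_(0 <= t < d) coprime d t * G J (C + t) + \sum_(0 <= t < d) coprime d t * E)).
  rewrite big_distrr -big_split /=; apply: leq_sum => t _.
  by case: (coprime d t); rewrite ?mul1n ?mul0n ?muln0.
by rewrite leq_add2r leq_mul2l step orbT.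
Qed.

End G.


Section Key.
Variables q d : nat.
Hypotheses (q2 : 1 < q) (d0 : 0 < d) (dq : d <= q).

Lemma u_lin m r : r < q -> uq q (m * q + r) = uq q (m * q) + r * wq q (m * q).
Proof.
elim: r => [|r IH] rq; first by rewrite addn0 mul0n addn0.
rewrite addnS uS IH ?(ltnW rq) // -addnS.
have := @W1 q q2 m 1 r.+1; rewrite expn1 => ->; last by [].
by rewrite (wsmall q2 rq) addn0 mulSn; lia.
Qed.

Lemma r_count Z Y : coprime d Y -> q %/ d <= \sum_(0 <= r < q) (d %| Z + r * Y).
Proof.
move=> cY; have [a0 a0d ha] := Bezoutl Y d0.
rewrite (eqP cY) in ha.
set r0 := (Z * a0) %% d.
have r0d : r0 < d by exact: ltn_pmod.
have base : d %| Z + r0 * Y.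
  have e : Z * (1 + a0 * Y) = Z + r0 * Y + (Z * a0 %/ d) * d * Y.
    rewrite mulnDr muln1 mulnA {1}(divn_eq (Z * a0) d) -/r0 mulnDl; lia.
  have : d %| Z * (1 + a0 * Y) by exact: dvdn_mull.
  have h3 : d %| Z * a0 %/ d * d * Y by apply: dvdn_mulr; apply: dvdn_mull.
  by rewrite e dvdn_addl.
apply: (@windows d); last by rewrite leq_trunc_div.
move=> i; exists (i * d + r0); first by apply/andP; split; lia.
have h4 : d %| i * d * Y by apply: dvdn_mulr; apply: dvdn_mull.
by rewrite mulnDl addnCA dvdn_addr.
Qed.

Lemma key xn K k :
  totient d * (q %/ d) * K * q ^ (2 * k) <=
  d * \sum_(0 <= n < K * q ^ (2 * k) * q) (d %| uq q n + xn) +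
  totient d * (q %/ d) * K * (q * q - d) ^ k.
Proof.
set J := 2 * k; set E := (q * q - d) ^ k.
rewrite sum_blocks.
have hm : forall m, (q %/ d) * coprime d (wq q (m * q)) <=
     \sum_(0 <= r < q) (d %| uq q (m * q + r) + xn).
  move=> m; case: (boolP (coprime d (wq q (m * q)))) => h; last by rewrite muln0.
  rewrite muln1; apply: leq_trans (r_count (uq q (m * q) + xn) h) _.
  rewrite big_nat_cond [X in _ <= X]big_nat_cond; apply: leq_sum => r /andP[/andP[_ rq] _].
  by rewrite u_lin // addnAC.
apply: (@leq_trans (d * ((q %/ d) * \sum_(0 <= m < K * q ^ J) coprime d (wq q (m * q))) +
   totient d * (q %/ d) * K * E)); last first.
  by rewrite leq_add2r leq_mul2l big_distrr /= leq_sum ?orbT // => m _; exact: hm.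
rewrite sum_blocks.
have hk : forall k', totient d * q ^ J <= d * \sum_(0 <= s < q ^ J) coprime d (wq q (k' * q ^ J * q) + wq q (s * q))
      + totient d * E.
  move=> k'; apply: cop_count => //; exact: G_lower.
have hs : (K - 0) * (totient d * q ^ J) <=
   d * \sum_(0 <= k' < K) \sum_(0 <= s < q ^ J) coprime d (wq q (k' * q ^ J * q) + wq q (s * q)) +
   (K - 0) * (totient d * E).
  by apply: sum_lb => k' _; exact: hk.
have eq : \sum_(0 <= k' < K) \sum_(0 <= s < q ^ J) coprime d (wq q ((k' * q ^ J + s) * q)) =
          \sum_(0 <= k' < K) \sum_(0 <= s < q ^ J) coprime d (wq q (k' * q ^ J * q) + wq q (s * q)).
  apply: eq_bigr => k' _; apply: eq_big_nat => s /andP[_ sJ].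
  rewrite mulnDl -!mulnA -expnSr W1 //; last by rewrite expnSr ltn_pmul2r // ltnW.
rewrite eq; move: hs; rewrite subn0.
set S := \sum_(0 <= k' < K) _ => hs.
have := leq_mul2l (q %/ d) (K * (totient d * q ^ J)) (d * S + K * (totient d * E)).
rewrite hs orbT => h'.
move: h'; lia.
Qed.

End Key.

Import Order.TTheory GRing.Theory Num.Theory.

Lemma totient_leq n : (totient n <= n)%N.
Proof.
rewrite totient_count_coprime.
apply: (@leq_trans (\sum_(0 <= t < n) 1)%N); last by rewrite sum_nat_const_nat subn0 muln1.
by apply: leq_sum => t _; case: coprime.
Qed.

Lemma exp_mono m n k : (m <= n)%N -> (m ^ k <= n ^ k)%N.
Proof. by move=> mn; elim: k => [|k IH] //; rewrite !expnS leq_mul. Qed.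

Lemma bern P k : (k * P ^ k <= P * P.+1 ^ k)%N.
Proof.
elim: k => [|k IH]; first by rewrite mul0n.
have h1 := @exp_mono _ _ k (leqnSn P).
rewrite expnS [P.+1 ^ k.+1]expnS mulSn.
have : (P * (k * P ^ k) <= P * (P * P.+1 ^ k))%N by rewrite leq_mul2l IH orbT.
have : (P * P ^ k <= P * P.+1 ^ k)%N by rewrite leq_mul2l h1 orbT.
rewrite mulnCA; set U := (P * P.+1 ^ k)%N; nia.
Qed.


Local Open Scope ring_scope.

Lemma cnt_sum q d (x : int) N : (0 < d)%N ->
  cnt q d x N = (\sum_(0 <= n < N) (d %| uq q n + `|(x %% d%:Z)%Z|))%N.
Proof.
move=> d0; rewrite /cnt -sum1_count big_mkcond /= /index_iota subn0.
apply: eq_bigr => n _.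
have xe : x = (x %/ d%:Z)%Z * d%:Z + (`|(x %% d%:Z)%Z|%N)%:Z.
  rewrite abszE ger0_norm; first exact: divz_eq.
  by apply: modz_ge0; rewrite eqz_nat -lt0n.
have -> : (((uq q n)%:Z + x) \in dvdz d%:Z) = (d %| uq q n + `|(x %% d%:Z)%Z|)%N.
  rewrite {1}xe addrCA addrC rpredDr; last by apply: dvdz_mull; exact: dvdzz.
  by rewrite -PoszD; exact: dvdzE.
by case: (_ %| _)%N.
Qed.

Lemma liminf_lb (R : realType) (u : nat -> R) (b : R) :
  (forall e : R, 0 < e -> exists N0, forall N, (N0 <= N)%N -> b - e <= u N) ->
  (b%:E <= limn_einf (fun N => (u N)%:E))%E.
Proof.
move=> h; rewrite limn_einf_lim; apply/lee_subgt0Pr => e e0.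
apply: lime_ge; first exact: is_cvg_einfs.
have [N0 hN0] := h e e0.
exists N0 => // n /= nN0.
apply: le_ereal_inf_tmp => _ [k /= nk <-].
by rewrite -EFinB lee_fin; apply: hN0; apply: leq_trans nk.
Qed.



Lemma exists_nat (R : realType) (y : R) : exists k : nat, (0 < k)%N /\ y < k%:R.
Proof.
exists (Num.Def.archi_bound `|y|).+1; split => //.
apply: (le_lt_trans (ler_norm y)); apply: (lt_le_trans (archi_boundP (normr_ge0 y))).
by rewrite ler_nat.
Qed.

Lemma eqle (R : realType) (x y : R) : x = y -> x <= y.
Proof. by move=> ->. Qed.

Lemma real_core (R : realType) (b e c0 d q X E K S n : R) :
  0 < e -> 0 < d -> 0 < q -> 0 < X -> 0 <= E -> E <= X -> 0 <= K -> 0 < n -> 0 <= c0 ->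
  b * (d * q) = c0 -> c0 <= d * q -> 2 * E <= e * X ->
  2 * b * (X * q) <= e * n ->
  c0 * K * X <= d * S + c0 * K * E ->
  n <= (K + 1) * (X * q) ->
  (b - e) * n <= S.
Proof.
move=> e0 d0 q0 X0 E0 EX K0 n0 c00 hb hc hE hN h1 h2.
have dqX : 0 < d * q * X by rewrite !mulr_gt0.
suff : (b - e) * n * (d * q * X) <= S * (d * q * X) by rewrite ler_pM2r.
have s1 : c0 * K * (X - E) * (q * X) <= d * S * (q * X).
  by rewrite ler_pM2r ?mulr_gt0 //; lra.
have s2 : c0 * (X - E) * (n - X * q) <= c0 * (X - E) * (K * X * q).
  by apply: ler_wpM2l; [rewrite mulr_ge0 // subr_ge0 | lra].
have s3 : 2 * c0 * E * n <= d * q * e * X * n.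
  apply: ler_wpM2r; first exact: ltW.
  have t1 : 2 * c0 * E <= d * q * (2 * E) by nra.
  have t2 : d * q * (2 * E) <= d * q * (e * X).
    by apply: ler_wpM2l => //; rewrite mulr_ge0 // ltW.
  by apply: le_trans t1 _; apply: le_trans t2 _; apply: eqle; ring.
have s4 : 2 * c0 * (X - E) * X * q <= X * (d * q) * (e * n).
  have : 2 * c0 * (X - E) * X * q <= 2 * c0 * X * X * q.
    have : 0 <= c0 * E * X * q by rewrite !mulr_ge0 // ltW.
    lra.
  move=> h; apply: le_trans h _.
  rewrite -hb.
  have : X * (d * q) * (2 * b * (X * q)) <= X * (d * q) * (e * n).
    by rewrite ler_wpM2l // mulr_ge0 // ?ltW // mulr_gt0.
  move=> h'; apply: le_trans h'; apply: eqle; ring.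
have eqL : (b - e) * n * (d * q * X) = c0 * X * n - e * n * (d * q * X).
  by rewrite -hb; ring.
rewrite eqL.
nra.
Qed.

Unset Implicit Arguments.
Set Strict Implicit.

Theorem proposition4p1 (R : realType) (d q : nat) (x : int) :
  (0 < d)%N -> (2 <= q)%N ->
  (((totient d)%:R / (d * q)%:R * (q %/ d)%:R : R)%:E <=
   limn_einf (fun N : nat => (((cnt q d x N)%:R / N%:R : R)%:E)))%E.
Proof.
move=> d0 q2.
apply: liminf_lb => e e0.
case: (leqP d q) => dq; last first.
  exists 0%N => N _; rewrite divn_small // mulr0 sub0r.
  apply: (@le_trans _ _ 0); first by rewrite oppr_le0 ltW.
  by apply: divr_ge0; apply: ler0n.
set b := (totient d)%:R / (d * q)%:R * (q %/ d)%:R.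
set xn := `|(x %% d%:Z)%Z|%N.
set P := (q * q).-1%N.
have [k [k0 hk]] := @exists_nat R (2 * P%:R / e).
set X := (q ^ (2 * k))%N; set E := ((q * q - d) ^ k)%N; set B := (X * q)%N.
set c0 := (totient d * (q %/ d))%N.
have X0 : (0 < X)%N by rewrite expn_gt0 ltnW.
have eX : X = (P.+1 ^ k)%N.
  have qq : (0 < q * q)%N by rewrite muln_gt0 (ltnW q2).
  by rewrite /X /P (prednK qq) expnM mulnn.
have hE : (E * k <= P * X)%N.
  have e2 : (E <= P ^ k)%N by apply: exp_mono; rewrite /P; lia.
  rewrite eX mulnC; apply: leq_trans (bern P k); by rewrite leq_mul2l e2 orbT.
have EX : (E <= X)%N by rewrite eX; apply: exp_mono; rewrite /P; lia.
have hc0 : (c0 <= d * q)%N by rewrite /c0 leq_mul ?totient_leq ?leq_div.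
have [N0 [N00 hN0]] := @exists_nat R (2 * b * B%:R / e).
exists N0 => N NN0.
have N0' : (0 < N)%N by apply: leq_trans NN0.
set K := (N %/ B)%N.
have hkey := key q2 d0 dq xn K k.
rewrite cnt_sum //.
set S := (\sum_(0 <= n < N) _)%N.
have mono : (\sum_(0 <= n < K * X * q) (d %| uq q n + xn) <= S)%N.
  have hle : (K * X * q <= N)%N by rewrite -mulnA leq_trunc_div.
  by rewrite /S [leqRHS](@big_cat_nat _ _ _ (K * X * q)%N) //=; exact: leq_addr.
have hKB : (N < K.+1 * B)%N by apply: ltn_ceil; rewrite muln_gt0 X0 ltnW.
have r1 : (c0 * K * X)%:R <= (d * S + c0 * K * E)%:R :> R.
  rewrite ler_nat; apply: leq_trans hkey _; rewrite leq_add2r leq_mul2l mono orbT //.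
have r2 : N%:R <= (K.+1 * B)%:R :> R by rewrite ler_nat ltnW.
rewrite !natrD !natrM in r1.
rewrite natrM -addn1 natrD /B natrM in r2.
rewrite ler_pdivlMr ?ltr0n //.
apply: (@real_core R b e c0%:R d%:R q%:R X%:R E%:R K%:R S%:R N%:R) => //.
- by rewrite ltr0n.
- by rewrite ltr0n ltnW.
- by rewrite ltr0n.
- by rewrite ler_nat.
- by rewrite ltr0n.
- have hdq : (d * q)%:R != 0 :> R by rewrite pnatr_eq0 -lt0n muln_gt0 d0 ltnW.
  by rewrite /b /c0 -natrM mulrAC divfK // natrM.
- by rewrite -natrM ler_nat.
-
  have k0' : (0 : R) < k%:R by rewrite ltr0n.
  have hE' : E%:R * k%:R <= P%:R * X%:R :> R by rewrite -!natrM ler_nat.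
  have hk' : 2 * P%:R < e * k%:R :> R by rewrite -ltr_pdivrMl // mulrC.
  have X0' : (0 : R) < X%:R by rewrite ltr0n.
  nra.
- have hN' : 2 * b * B%:R < e * N0%:R by rewrite -ltr_pdivrMl // mulrC.
  have : (N0%:R : R) <= N%:R by rewrite ler_nat.
  rewrite /B natrM in hN'.
  have b0 : 0 <= b by rewrite /b !mulr_ge0 // invr_ge0.
  nra.
- by rewrite /c0 natrM.
Qed.
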